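(* There exist constants $c > 0$ and $n_0$ such that for every $n \ge n_0$ there exists a word $w$ of length $4n^2$ over an alphabet of $n$ symbols such that $TG(w)$ is a temporal path graph on $n$ vertices and every temporal walk in $TG(w)$ that visits all $n$ vertices has length at least $c n^2$ (i.e. exploring $TG(w)$ requires $\Omega(n^2)$ timesteps).
   Context: For a word $w$, $w[i]$ is its $i$-th letter, $w[i,j]$ the factor $w[i]\cdots w[j]$, $\mathrm{letters}(u)$ the set of symbols occurring in $u$, and $\pi_{\mathcal S}(w)$ the subsequence of $w$ of all occurrences of symbols in $\mathcal S$. Symbols $x,y$ alternate in $w$ if $\pi_{\{x,y\}}(w) \in \{(xy)^k, (xy)^kx, (yx)^k, (yx)^ky : k \ge 0\}$. $G(w)$ has one vertex $v_a$ per alphabet symbol $a$ and undirected edge $(v_x,v_y)$ iff $x\neq y$ alternate in $w$. Start points: $S_1=1$, and $S_i$ is the least index $j>S_{i-1}$ with $w[j] \in \mathrm{letters}(w[S_{i-1},j-1])$; $S_1<\dots<S_T$ are all start points. The $t$-th timestep factor is $w[S_t,S_{t+1}-1]$ ($t<T$) or $w[S_T,|w|]$ ($t=T$). $TG(w)=(V,E_1,\dots,E_T)$ with $E_t$ the set of edges $(v_x,v_y)$ of $G(w)$ with $x$ or $y$ occurring in the $t$-th timestep factor. A temporal path graph is such a $TG(w)$ whose underlying graph $(V,\bigcup_t E_t)$ is a path. A temporal walk is a sequence $(e_1,t_1),\dots,(e_k,t_k)$ with $e_i\in E_{t_i}$, the end point of $e_i$ equal to the start point of $e_{i+1}$, and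 $t_1<\dots<t_k$; it visits the endpoints of its edges and has length $t_k$. *)

(* Defs.v *)
(* Words are sequences over an eqType; positions are 0-indexed
   internally, timesteps are 1-indexed as in the paper. *)
From mathcomp Require Import all_boot all_order all_algebra.
Set Implicit Arguments. Unset Strict Implicit. Unset Printing Implicit Defensive.

Section Defs.
Variable T : eqType.

Definition alt_word (k : nat) (a b : T) : seq T := flatten (nseq k [:: a; b]).

Definition proj2 (x y : T) (w : seq T) : seq T :=
  [seq a <- w | (a == x) || (a == y)].

Definition alternate (w : seq T) (x y : T) : Prop :=
  exists k : nat,
    proj2 x y w = alt_word k x y \/ proj2 x y w = rcons (alt_word k x y) x \/
    proj2 x y w = alt_word k y x \/ proj2 x y w = rcons (alt_word k y x) y.

Definition G_edge (w : seq T) (x y : T) : Prop := x <> y /\ alternate w x y.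

(* Least (0-indexed) j > s, j < |w|, with w[j] in letters(w[s..j-1]). *)
Definition next_start (w : seq T) (s : nat) : option nat :=
  ohead [seq j <- iota s.+1 (size w - s.+1) |
          if onth w j is Some a then a \in take (j - s) (drop s w) else false].

Fixpoint starts_from (fuel : nat) (w : seq T) (s : nat) : seq nat :=
  s :: match fuel with
       | 0 => [::]
       | f.+1 => if next_start w s is Some j then starts_from f w j else [::]
       end.

Definition starts (w : seq T) : seq nat := starts_from (size w) w 0.

Definition n_timesteps (w : seq T) : nat := size (starts w).

(* S_i for 1 <= i <= T (0-indexed position); S_{T+1} := |w| *)
Definition start_pt (w : seq T) (i : nat) : nat := nth (size w) (starts w) i.-1.

Definition ts_factor (w : seq T) (t : nat) : seq T :=
  take (start_pt w t.+1 - start_pt w t) (drop (start_pt w t) w).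

Definition TG_edge (w : seq T) (t : nat) (x y : T) : Prop :=
  (1 <= t <= n_timesteps w)%N /\ G_edge w x y /\
  (x \in ts_factor w t \/ y \in ts_factor w t).

Definition underlying_edge (w : seq T) (x y : T) : Prop :=
  exists t : nat, TG_edge w t x y.

(* A temporal walk: a list of traversed edges ((u, v), t): edge (v_u, v_v)
   used at timestep t, traversed from u to v. *)
Definition temporal_walk (w : seq T) (W : seq (T * T * nat)) : Prop :=
  (forall e, e \in W -> TG_edge w e.2 e.1.1 e.1.2) /\
  (forall p, p \in zip W (behead W) -> p.1.1.2 = p.2.1.1) /\
  sorted ltn [seq e.2 | e <- W].

Definition walk_visits (W : seq (T * T * nat)) (v : T) : Prop :=
  v \in flatten [seq [:: e.1.1; e.1.2] | e <- W].

Definition walk_length (W : seq (T * T * nat)) : nat := last 0%N [seq e.2 | e <- W].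

End Defs.

Definition is_path_graph (n : nat) (E : 'I_n -> 'I_n -> Prop) : Prop :=
  exists s : seq 'I_n, size s = n /\ uniq s /\
    forall x y : 'I_n, E x y <->
      exists i : nat, (i.+1 < n)%N /\
        ((x = nth x s i /\ y = nth x s i.+1) \/ (y = nth x s i /\ x = nth x s i.+1)).

Definition temporal_path_graph (n : nat) (w : seq 'I_n) : Prop :=
  is_path_graph (underlying_edge w).

(* Main.v *)
Require Import Defs.
From mathcomp Require Import all_boot all_order all_algebra zify.
Set Implicit Arguments. Unset Strict Implicit. Unset Printing Implicit Defensive.

Section Gen.
Variable T : eqType.
Implicit Types (w : seq T).

Lemma ns_some w s j : next_start w s = Some j -> s < j < size w.
Proof.
rewrite /next_start.
case E: [seq _ <- _ | _] => [|h t] //= [<-].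
have : h \in [seq j <- iota s.+1 (size w - s.+1) | if onth w j is Some a then a \in take (j - s) (drop s w) else false].
  by rewrite E inE eqxx.
rewrite mem_filter mem_iota => /andP [_ /andP [H1 H2]].
apply/andP; split => //. lia.
Qed.

Lemma ns_none w s : size w <= s.+1 -> next_start w s = None.
Proof. by move=> H; rewrite /next_start (_ : size w - s.+1 = 0) //; lia. Qed.

Lemma onth_nth w j x0 : j < size w -> onth w j = Some (nth x0 w j).
Proof. elim: w j => [|a w IH] [|j] //= H. by apply: IH. Qed.

Lemma ns_window w s L : ~~ uniq (take L.+1 (drop s w)) ->
  exists j, next_start w s = Some j /\ j <= s + L.
Proof.
move=> Hu.
have [x0 _] : exists x0, x0 \in take L.+1 (drop s w).
  by case: (take L.+1 (drop s w)) Hu => [|a t] //= _; exists a; rewrite inE eqxx.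
case/(uniqPn x0): Hu => i [j [Hij Hj Heq]].
rewrite size_take_min in Hj.
have HjL : j <= L by lia.
have Hjw : s + j < size w by move: Hj; rewrite size_drop; lia.
set P := fun jj => if onth w jj is Some a then a \in take (jj - s) (drop s w) else false.
have HP : P (s + j).
  rewrite /P (onth_nth x0 Hjw) (_ : s + j - s = j); last lia.
  rewrite nth_take in Heq; last lia.
  rewrite nth_take in Heq; last lia.
  rewrite -nth_drop -Heq -(nth_take x0 Hij).
  apply: mem_nth. rewrite size_take_min size_drop. lia.
rewrite /next_start -/P.
have Hin : s + j \in [seq jj <- iota s.+1 (size w - s.+1) | P jj].
  rewrite mem_filter HP /= mem_iota. lia.
have Hs : sorted ltn [seq jj <- iota s.+1 (size w - s.+1) | P jj].
  apply: sorted_filter; [exact: ltn_trans| exact: iota_ltn_sorted].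
case: [seq jj <- _ | P jj] Hin Hs => [|h t] //= Hin Hs.
exists h; split => //.
move: Hin; rewrite inE => /orP [/eqP <-|Hin]; first lia.
have := order_path_min ltn_trans Hs => /allP /(_ _ Hin). lia.
Qed.

Lemma starts_from_spec f w s : size w <= (f + s).+1 ->
  let st := starts_from f w s in
  nth 0 st 0 = s /\
  forall i, i < size st ->
    if i.+1 < size st then next_start w (nth 0 st i) = Some (nth 0 st i.+1)
    else next_start w (nth 0 st i) = None.
Proof.
elim: f s => [|f IH] s Hs /=.
  split => // -[|i] //= _. by rewrite ns_none.
split => //.
case E: (next_start w s) => [j|] /=; last by case.
have /andP [Hsj _] := ns_some E.
have [H0 H1] := IH j (ltac:(lia)).
move: H0 H1; set st := starts_from f w j => H0 H1.
have Hpos : 0 < size st by rewrite /st; case: f {IH H0 H1 Hs st} => //.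
case=> [|i] /=.
  by move=> _; rewrite ltnS Hpos H0 E.
move=> Hi. exact: H1.
Qed.

Lemma starts_spec w :
  nth 0 (starts w) 0 = 0 /\ 0 < size (starts w) /\
  forall i, i < size (starts w) ->
    if i.+1 < size (starts w) then next_start w (nth 0 (starts w) i) = Some (nth 0 (starts w) i.+1)
    else next_start w (nth 0 (starts w) i) = None.
Proof.
have [H0 H1] := @starts_from_spec (size w) w 0 (ltac:(lia)).
split => //; split => //. by rewrite /starts; case: (size w).
Qed.

Lemma starts_cover f w s p : size w <= (f + s).+1 -> s <= p < size w ->
  let st := starts_from f w s in
  exists i, i < size st /\ nth 0 st i <= p < nth (size w) st i.+1.
Proof.
elim: f s => [|f IH] s Hs Hp /=.
  by exists 0; split => //=; lia.
case E: (next_start w s) => [j|] /=; last by exists 0; split => //=; lia.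
have /andP [Hsj _] := ns_some E.
case: (ltnP p j) => Hpj.
  exists 0; split => //=.
  have -> : nth (size w) (starts_from f w j) 0 = j by case: f {IH Hs}.
  lia.
have [i [Hi Hi2]] := IH j (ltac:(lia)) (ltac:(lia)).
by exists i.+1.
Qed.

Lemma coverage w p x0 : p < size w ->
  exists t, 1 <= t <= n_timesteps w /\ nth x0 w p \in ts_factor w t.
Proof.
move=> Hp.
have [i [Hi /andP [H1 H2]]] := @starts_cover (size w) w 0 p (ltac:(lia)) (ltac:(lia)).
exists i.+1; split; first by rewrite /n_timesteps /starts; lia.
rewrite /ts_factor /start_pt /= -/(starts w).
rewrite (set_nth_default (size w) 0 Hi) in H1.
set A := nth (size w) (starts w) i in H1 *.
set B := nth (size w) (starts w) i.+1 in H2 *.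
have -> : nth x0 w p = nth x0 (take (B - A) (drop A w)) (p - A).
  rewrite nth_take; last lia. rewrite nth_drop. congr nth. lia.
apply: mem_nth. rewrite size_take_min size_drop. lia.
Qed.

Lemma sorted_last (l : seq nat) t : sorted ltn l -> t \in l -> t <= last 0 l.
Proof.
case: l => [|a l] //=.
elim: l a t => [|b l IH] a t /=; first by rewrite inE => _ /eqP ->.
move=> /andP [Hab Hp]; rewrite inE => /orP [/eqP ->|Ht].
  have := IH b b Hp (mem_head _ _). lia.
exact: IH.
Qed.

Lemma lower_bound w M L t a :
  (forall s, s < M -> ~~ uniq (take L.+1 (drop s w))) ->
  a \notin take M w -> a \in ts_factor w t -> M <= L * t.
Proof.
move=> Hwin HaM Ha.
have [H0 [Hpos Hsp]] := starts_spec w.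
set st := starts w in H0 Hpos Hsp.
have claim : forall i, L * i < M -> i < size st /\ nth 0 st i <= L * i.
  elim=> [|i IH] HLi; first by rewrite H0.
  have [Hi Hsi] := IH (ltac:(lia)).
  have [j [Hj Hjle]] := ns_window (Hwin _ (ltac:(lia) : nth 0 st i < M)).
  have := Hsp i Hi. case: ifP => Hi1; last by rewrite Hj.
  rewrite Hj => -[<-]. split => //. lia.
rewrite leqNgt; apply/negP => Hlt.
have [Ht Hst] := claim t Hlt.
move: Ha; rewrite /ts_factor /start_pt /= -/st.
set A := nth (size w) st t.-1.
set B := nth (size w) st t.
have HB : B < M by rewrite /B (set_nth_default 0 (size w) Ht); lia.
case: (leqP A B) => HAB; last by rewrite (_ : B - A = 0) ?take0 //; lia.
rewrite take_drop subnK // => /mem_drop HaB.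
move: HaB; rewrite -(take_takel w (ltnW HB)) => /mem_take.
by rewrite (negbTE HaM).
Qed.

End Gen.

Section Alt.
Variable T : eqType.
Implicit Types (x y : T) (w : seq T).
Definition neqr : rel T := fun a b => a != b.

Lemma alt_S k x y : alt_word k.+1 x y = x :: y :: alt_word k x y.
Proof. by []. Qed.

Lemma alt_cat a b x y : alt_word a x y ++ alt_word b x y = alt_word (a + b) x y.
Proof. by elim: a => [|a IH] //; rewrite addSn !alt_S /= IH. Qed.

Lemma cons_alt k x y : y :: alt_word k x y = rcons (alt_word k y x) y.
Proof. by elim: k => [|k IH] //; rewrite !alt_S /= IH. Qed.

Lemma cons_rcons_alt k x y : y :: rcons (alt_word k x y) x = alt_word k.+1 y x.
Proof. by elim: k => [|k IH] //; rewrite !alt_S /= IH. Qed.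

Lemma alt_sorted k x y : x != y -> sorted neqr (alt_word k x y).
Proof.
move=> Hxy.
suff : sorted neqr (alt_word k x y) /\ path neqr y (alt_word k x y) by case.
elim: k => [|k [IH1 IH2]] //=.
rewrite /neqr Hxy eq_sym Hxy /=.
by case: k IH1 IH2 => [|k] //= ->.
Qed.

Lemma alt_rcons_sorted k x y : x != y -> sorted neqr (rcons (alt_word k x y) x).
Proof.
move=> Hxy.
have := alt_sorted k.+1 Hxy.
by rewrite -addn1 -alt_cat (_ : alt_word 1 x y = [:: x] ++ [:: y]) // catA [alt_word k x y ++ _]cats1 => /cat_sorted2 [].
Qed.

Lemma alternate_sorted w x y : x != y -> alternate w x y -> sorted neqr (proj2 x y w).
Proof.
move=> Hxy [k [->|[->|[->|->]]]].
- exact: alt_sorted.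
- exact: alt_rcons_sorted.
- by apply: alt_sorted; rewrite eq_sym.
- by apply: alt_rcons_sorted; rewrite eq_sym.
Qed.

Lemma not_sorted_xx s1 s2 x : ~~ sorted neqr (s1 ++ x :: x :: s2).
Proof.
apply/negP => /cat_sorted2 [_] /=. by rewrite /neqr eqxx.
Qed.

Lemma proj2_sym w x y : proj2 x y w = proj2 y x w.
Proof. apply: eq_filter => a. by rewrite orbC. Qed.

Lemma alternate_sym w x y : alternate w x y -> alternate w y x.
Proof.
rewrite /alternate proj2_sym.
by move=> [k [H|[H|[H|H]]]]; exists k; tauto.
Qed.

Lemma proj2_cons x y a s : proj2 x y (a :: s) = if (a == x) || (a == y) then a :: proj2 x y s else proj2 x y s.
Proof. by []. Qed.

Lemma proj2_cat x y s1 s2 : proj2 x y (s1 ++ s2) = proj2 x y s1 ++ proj2 x y s2.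
Proof. exact: filter_cat. Qed.

End Alt.

Ltac dec := repeat match goal with
 | |- context [?a == ?b] => (rewrite (_ : (a == b) = true); last by lia) || (rewrite (_ : (a == b) = false); last by lia)
 | |- context [?a <= ?b] => (rewrite (_ : (a <= b) = true); last by lia) || (rewrite (_ : (a <= b) = false); last by lia)
 end.

Fixpoint sweep (d k : nat) : seq nat :=
  if d is d'.+1 then k.+1 :: k :: sweep d' k.+1 else [:: k.+1; k; k.+1].

Lemma pi_sweep d k x : x.+1 <= k + d + 1 -> proj2 x x.+1 (sweep d k) =
  if x.+1 < k then [::] else if x.+1 == k then [:: x.+1]
  else if x == k then [:: x.+1; x; x.+1] else [:: x; x.+1; x; x.+1].
Proof.
elim: d k => [|d IH] k H; rewrite [sweep _ _]/=.
  rewrite !proj2_cons /proj2 /=.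
  have : x.+1 < k \/ x.+1 = k \/ x = k by lia.
  by case=> [H1|[H1|H1]]; dec => //=; subst.
rewrite !proj2_cons IH; last lia.
have : x.+1 < k \/ x.+1 = k \/ x = k \/ x = k.+1 \/ k.+1 < x by lia.
by case=> [H1|[H1|[H1|[H1|H1]]]]; dec => //=; subst.
Qed.

Lemma pi_sweep_eq d k x y : x = k -> x.+2 <= y -> exists t, proj2 x y (sweep d k) = x :: t.
Proof.
move=> Hx Hy; case: d => [|d]; rewrite [sweep _ _]/= !proj2_cons; dec => /=; subst;
  by eexists.
Qed.

Lemma pi_sweep_far d k x y : k < x -> x.+2 <= y -> y <= k + d + 1 ->
  exists t, proj2 x y (sweep d k) = x :: x :: t.
Proof.
elim: d k => [|d IH] k H1 H2 H3; first lia.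
rewrite [sweep _ _]/= !proj2_cons.
have [Hx|Hx] : x = k.+1 \/ k.+1 < x by lia.
  dec => /=. have [t Ht] := pi_sweep_eq d Hx H2. rewrite Ht Hx. by eexists.
dec. apply: IH => //; lia.
Qed.

Lemma mem_sweep d k z : z \in sweep d k -> k <= z <= k + d + 1.
Proof.
elim: d k => [|d IH] k /=; rewrite !inE.
  case/or3P => /eqP ->; lia.
case/or3P => [/eqP ->|/eqP ->|/IH]; lia.
Qed.

Lemma sweep_all d k z : k <= z <= k + d + 1 -> z \in sweep d k.
Proof.
elim: d k => [|d IH] k /= H; rewrite !inE.
  have : z = k \/ z = k.+1 by lia. by case=> ->; rewrite eqxx ?orbT.
have [->|Hz] : z = k \/ k.+1 <= z <= k.+1 + d + 1 by lia.
  by rewrite eqxx orbT.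
by rewrite IH ?orbT.
Qed.

Lemma size_sweep d k : size (sweep d k) = 2 * d + 3.
Proof. elim: d k => [|d IH] k //=. rewrite IH. lia. Qed.

Ltac nu := rewrite !inE !eqxx /= ?orbT /= ?andbF ?andFb.

Lemma nuniq_take_mono (s : seq nat) a b : a <= b -> ~~ uniq (take a s) -> ~~ uniq (take b s).
Proof.
move=> Hab; apply: contra => Hu.
rewrite -(take_takel s Hab). exact: take_uniq.
Qed.

Lemma sweep_start d k rest : ~~ uniq (take 4 (sweep d k ++ rest)).
Proof.
case: d => [|d] /=.
  by nu.
case: d => [|d] /=; by nu.
Qed.

Lemma sweep_window d k s rest : s < size (sweep d k) -> ~~ uniq (take 4 rest) ->
  ~~ uniq (take 6 (drop s (sweep d k ++ rest))).
Proof.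
elim: d k s => [|d IH] k s Hs Hr.
  move: Hs; rewrite size_sweep /=.
  case: s => [|[|[|s]]] //= _.
  - by nu.
  - rewrite negb_and; apply/orP; right. rewrite negb_and; apply/orP; right.
    by apply: nuniq_take_mono Hr.
  - rewrite negb_and; apply/orP; right. by apply: nuniq_take_mono Hr.
case: s Hs => [|[|s]] Hs.
- rewrite [sweep _ _]/= drop0.
  case: d {IH Hs} => [|d] /=; by nu.
- rewrite [sweep _ _]/= /=.
  case: d {IH Hs} => [|d] /=; first by nu.
  case: d => [|d] /=; by nu.
- rewrite [sweep _ _]/= /=. apply: IH => //; move: Hs; rewrite !size_sweep /=; lia.
Qed.

Fixpoint Xp (n l : nat) : seq nat :=
  if l is l'.+1 then Xp n l' ++ sweep (2 * l') (n - 2 - 2 * l') else [::].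

Lemma size_Xp n l : size (Xp n l) = 2 * l ^ 2 + l.
Proof. elim: l => [|l IH] //=. rewrite size_cat IH size_sweep. nia. Qed.

Lemma mem_Xp n l z : 2 * l <= n - 2 -> z \in Xp n l -> n - 2 * l <= z <= n - 1.
Proof.
elim: l => [|l IH] //= Hl. rewrite mem_cat => /orP [/IH|/mem_sweep]; lia.
Qed.

Lemma Xp_window n l s rest : s < size (Xp n l) -> ~~ uniq (take 4 rest) ->
  ~~ uniq (take 6 (drop s (Xp n l ++ rest))).
Proof.
elim: l rest s => [|l IH] rest s //= Hs Hr.
rewrite -catA.
case: (ltnP s (size (Xp n l))) => H.
  apply: IH => //. exact: sweep_start.
rewrite drop_cat ltnNge H /=. apply: sweep_window => //.
move: Hs; rewrite size_cat. lia.
Qed.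

Lemma pi_Xp n x l : x.+1 < n -> 2 * l <= n - 2 ->
  (proj2 x x.+1 (Xp n l) = [::] /\ x.+1 < n - 2 * l) \/
  ((exists q, proj2 x x.+1 (Xp n l) = x.+1 :: alt_word q x x.+1) /\ n - 2 * l <= x.+1).
Proof.
move=> Hx; elim: l => [|l IH] Hl; first by left; split => //; lia.
rewrite [Xp _ _]/= proj2_cat pi_sweep; last lia.
case: (IH (ltac:(lia))) => [[-> H]|[[q ->] H]].
  have : x.+1 < n - 2 - 2 * l \/ x.+1 = n - 2 - 2 * l \/ x = n - 2 - 2 * l by lia.
  case=> [H1|[H1|H1]]; dec => /=.
  - left; split => //; lia.
  - right; split; [by exists 0|lia].
  - right; split; [by exists 1|lia].
dec => /=. right; split; last lia.
exists (q + 2). by rewrite -alt_cat.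
Qed.

Lemma pi_iota a l x : a <= x -> proj2 x x.+1 (iota a l) = take (l - (x - a)) [:: x; x.+1].
Proof.
move=> Hax; elim: l => [|l IH]; first by rewrite sub0n.
rewrite (_ : iota a l.+1 = iota a l ++ [:: a + l]); last by rewrite -addn1 iotaD.
rewrite proj2_cat IH /= /proj2 /= -(addn1 l).
have : a + l < x \/ a + l = x \/ a + l = x.+1 \/ x.+1 < a + l by lia.
case=> [H|[H|[H|H]]].
- rewrite (_ : l - (x - a) = 0); last lia. rewrite (_ : l + 1 - (x - a) = 0); last lia.
  by dec.
- rewrite (_ : l - (x - a) = 0); last lia. rewrite (_ : l + 1 - (x - a) = 1); last lia.
  by dec => /=; rewrite H.
- rewrite (_ : l - (x - a) = 1); last lia. rewrite (_ : l + 1 - (x - a) = 2); last lia.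
  by dec => /=; rewrite H.
- rewrite (_ : l - (x - a) = (l - (x - a) - 2).+2); last lia.
  rewrite (_ : l + 1 - (x - a) = (l - (x - a) - 2).+3); last lia.
  by dec.
Qed.

Lemma pi_nseq n m x : x.+1 < n ->
  proj2 x x.+1 (flatten (nseq m (iota 0 n))) = alt_word m x x.+1.
Proof.
move=> Hx; elim: m => [|m IH] //=.
rewrite proj2_cat IH pi_iota // (_ : n - (x - 0) = (n - x - 2).+2) //; lia.
Qed.

Definition U n := 0 :: sweep (n - 2) 0.
Definition qq n := n %/ 4.
Definition XX n := Xp n (qq n).
Definition restn n := 4 * n ^ 2 - size (XX n) - 2 * n.
Definition tailw n := flatten (nseq (restn n %/ n) (iota 0 n)) ++ take (restn n %% n) (iota 0 n).
Definition wn n := XX n ++ (U n ++ tailw n).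

Section W.
Variable n : nat.
Hypothesis Hn : 16 <= n.

Lemma qq_bound : qq n * 4 <= n /\ 4 <= qq n.
Proof.
split; first exact: leq_divM.
rewrite /qq. have := divn_eq n 4. have := ltn_pmod n (isT : 0 < 4). nia.
Qed.

Lemma size_XX : size (XX n) = 2 * qq n ^ 2 + qq n.
Proof. exact: size_Xp. Qed.

Lemma size_U : size (U n) = 2 * n.
Proof. rewrite /= size_sweep. lia. Qed.

Lemma size_flatten_nseq m (s : seq nat) : size (flatten (nseq m s)) = m * size s.
Proof. elim: m => [|m IH] //=. rewrite size_cat IH. lia. Qed.

Lemma size_wn : size (wn n) = 4 * n ^ 2.
Proof.
have [Hq1 Hq2] := qq_bound.
rewrite /wn /tailw !size_cat size_U size_flatten_nseq size_iota size_takel; last first.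
  rewrite size_iota. apply: ltnW. apply: ltn_pmod. lia.
rewrite -divn_eq /restn size_XX. nia.
Qed.

Lemma mem_tailw z : z \in tailw n -> z < n.
Proof.
rewrite /tailw mem_cat => /orP [|/mem_take]; last by rewrite mem_iota.
elim: (restn n %/ n) => [|m IH] //=. rewrite mem_cat => /orP [|/IH] //.
by rewrite mem_iota.
Qed.

Lemma mem_U z : z \in U n -> z < n.
Proof. rewrite inE => /orP [/eqP ->|/mem_sweep]; lia. Qed.

Lemma U_all z : z < n -> z \in U n.
Proof. move=> Hz. rewrite inE sweep_all ?orbT //. lia. Qed.

Lemma mem_XX z : z \in XX n -> 2 <= z < n.
Proof. have [Hq1 Hq2] := qq_bound. move/mem_Xp => H. have := H (ltac:(lia)). lia. Qed.

Lemma mem_wn z : z \in wn n -> z < n.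
Proof.
rewrite /wn mem_cat => /orP [H|]; last rewrite mem_cat => /orP [H|H].
- have := mem_XX H. lia.
- exact: mem_U H.
- exact: mem_tailw H.
Qed.

Lemma wn_window s : s < size (XX n) -> ~~ uniq (take 6 (drop s (wn n))).
Proof.
move=> Hs. apply: Xp_window => //.
rewrite /U (_ : n - 2 = (n - 3).+1); last lia.
by rewrite [sweep _ _]/= /=.
Qed.

Lemma take_wn : take (size (XX n)) (wn n) = XX n.
Proof. by rewrite /wn take_size_cat. Qed.

Lemma pi_U_adj x : x.+1 < n -> proj2 x x.+1 (U n) = alt_word 2 x x.+1.
Proof.
move=> Hx. rewrite /U proj2_cons pi_sweep; last lia.
case: x Hx => [|x] Hx; dec => //=.
Qed.

Lemma pi_tail_adj x : x.+1 < n -> exists m, exists T,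
  proj2 x x.+1 (tailw n) = alt_word m x x.+1 ++ T /\
  (T = [::] \/ T = [:: x] \/ T = alt_word 1 x x.+1).
Proof.
move=> Hx. exists (restn n %/ n).
rewrite /tailw proj2_cat pi_nseq // take_iota (_ : minn (restn n %% n) n = restn n %% n); last first.
  have := ltn_pmod (restn n) (ltac:(lia) : 0 < n). lia.
rewrite pi_iota // subn0.
eexists; split; first reflexivity.
case: (restn n %% n - x) => [|[|k]] /=; tauto.
Qed.

Lemma alt_adj x : x.+1 < n -> alternate (wn n) x x.+1.
Proof.
move=> Hx.
have [Hq1 Hq2] := qq_bound.
have [m [T [HT HT']]] := pi_tail_adj Hx.
rewrite /alternate /wn proj2_cat [proj2 _ _ (U n ++ _)]proj2_cat pi_U_adj // HT [alt_word 2 _ _ ++ _]catA alt_cat.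
set K := 2 + m.
have [[-> _]|[[q ->] _]] := @pi_Xp n x (qq n) Hx (ltac:(lia)).
- rewrite cat0s. case: HT' => [->|[->|->]].
  + by exists K; left; rewrite cats0.
  + by exists K; right; left; rewrite cats1.
  + exists (K + 1); left; by rewrite alt_cat.
- rewrite cat_cons catA alt_cat. case: HT' => [->|[->|->]].
  + exists (q + K); right; right; right. by rewrite cats0 cons_alt.
  + exists (q + K).+1; right; right; left. by rewrite cats1 cons_rcons_alt.
  + exists (q + K + 1); right; right; right. by rewrite alt_cat cons_alt.
Qed.

Lemma pi_U_far x y : x.+2 <= y -> y < n -> exists t, proj2 x y (U n) = x :: x :: t.
Proof.
move=> Hxy Hy. rewrite /U proj2_cons.
case: x Hxy => [|x] Hxy.
  rewrite eqxx /=. have [t ->] := pi_sweep_eq (n - 2) (erefl 0) Hxy. by eexists.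
dec. apply: pi_sweep_far => //; lia.
Qed.

Lemma nalt_far x y : x.+2 <= y -> y < n -> ~ alternate (wn n) x y.
Proof.
move=> Hxy Hy /alternate_sorted H.
have /H : x != y by apply/eqP; lia.
have [t Ht] := pi_U_far Hxy Hy.
rewrite /wn proj2_cat [proj2 _ _ (U n ++ _)]proj2_cat Ht.
exact: (negP (not_sorted_xx (proj2 x y (XX n)) (t ++ proj2 x y (tailw n)) x)).
Qed.

Lemma alt_iff a b : a < n -> b < n -> a != b ->
  (alternate (wn n) a b <-> (b = a.+1 \/ a = b.+1)).
Proof.
move=> Ha Hb Hab.
case: (ltngtP a b) => H.
- split.
  + move=> Halt. left. case: (leqP a.+2 b) => H2; first by case: (nalt_far H2 Hb Halt). lia.
  + case=> E; [subst b; exact: alt_adj|lia].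
- split.
  + move=> /alternate_sym Halt. right. case: (leqP b.+2 a) => H2; first by case: (nalt_far H2 Ha Halt). lia.
  + case=> E; [lia|subst a]. apply: alternate_sym. exact: alt_adj.
- by rewrite H eqxx in Hab.
Qed.

End W.

Lemma map_alt (S T : eqType) (f : S -> T) k a b : map f (alt_word k a b) = alt_word k (f a) (f b).
Proof. by elim: k => [|k IH] //; rewrite !alt_S /= IH. Qed.

Lemma arith N q r Lw t : N = q * 4 + r -> r < 4 -> 4 <= q -> 2 * q ^ 2 + q <= 5 * t -> t <= Lw ->
  N ^ 2 <= 256 * Lw.
Proof. move=> -> *. nia. Qed.

Section O.
Variable n' : nat.
Local Notation n := n'.+1.
Hypothesis Hn : 16 <= n.
Definition wo : seq 'I_n := map (@inord n') (wn n).

Lemma proj2_wo (x y : 'I_n) : map val (proj2 x y wo) = proj2 (val x) (val y) (wn n).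
Proof.
rewrite /proj2 /wo filter_map -map_comp.
set s := filter _ (wn n).
have -> : map (val \o (@inord n')) s = s.
  rewrite -[RHS]map_id. apply/eq_in_map => z; rewrite mem_filter => /andP [_ Hz] /=.
  by rewrite inordK // (mem_wn Hn Hz).
rewrite /s.
apply: eq_in_filter => z Hz /=.
have Hz' := mem_wn Hn Hz.
by rewrite -!(inj_eq val_inj) /= inordK.
Qed.

Lemma alt_wo (x y : 'I_n) : alternate wo x y <-> alternate (wn n) (val x) (val y).
Proof.
split.
- move=> [k H]; exists k; rewrite -proj2_wo.
  by case: H => [->|[->|[->|->]]]; rewrite ?map_rcons map_alt; tauto.
- move=> [k H]; exists k; rewrite -proj2_wo in H.
  case: H => H; [left|right; case: H => H; [left|right; case: H => H; [left|right]]];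
  apply: (inj_map val_inj); by rewrite H ?map_rcons map_alt.
Qed.

Lemma G_edge_wo (x y : 'I_n) : G_edge wo x y <-> ((y : nat) = (x : nat).+1 \/ (x : nat) = (y : nat).+1).
Proof.
split.
- move=> [Hne /alt_wo Halt].
  have Hne' : val x != val y by apply/eqP => /val_inj.
  exact: (proj1 (alt_iff Hn (ltn_ord x) (ltn_ord y) Hne') Halt).
- move=> H.
  have Hne' : (x : nat) != y by apply/eqP; lia.
  split; first by move=> E; move: Hne'; rewrite E eqxx.
  apply/alt_wo. exact: ((alt_iff Hn (ltn_ord x) (ltn_ord y) Hne').2 H).
Qed.

Lemma in_wo (x : 'I_n) : x \in wo.
Proof.
have -> : x = inord (val x) by apply: val_inj; rewrite /= inordK.
apply: map_f. rewrite /wn mem_cat [_ \in U n ++ _]mem_cat U_all ?orbT //. exact: ltn_ord.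
Qed.

Lemma cover_wo (x : 'I_n) : exists t, 1 <= t <= n_timesteps wo /\ x \in ts_factor wo t.
Proof.
have Hx := in_wo x.
have [t [Ht Hin]] := coverage x (ltac:(by rewrite index_mem) : index x wo < size wo).
exists t; split => //. by rewrite nth_index in Hin.
Qed.

Lemma path_wo : temporal_path_graph wo.
Proof.
exists (enum 'I_n); split; first by rewrite size_enum_ord.
split; first exact: enum_uniq.
move=> x y; have Hx := ltn_ord x; have Hy := ltn_ord y; split.
- move=> [t [_ [/G_edge_wo H _]]].
  case: H => H.
  + exists x; split; first by rewrite -H ltn_ord.
    left; split; apply: val_inj; rewrite /= nth_enum_ord //; lia.
  + exists y; split; first by rewrite -H ltn_ord.
    right; split; apply: val_inj; rewrite /= nth_enum_ord //; lia.
- move=> [i [Hi H]].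
  have [t [Ht Hxf]] := cover_wo x.
  exists t; split => //; split; last by left.
  apply/G_edge_wo.
  case: H => [[-> ->]|[-> ->]]; rewrite !nth_enum_ord //; lia.
Qed.

Lemma size_wo : size wo = 4 * n ^ 2.
Proof. by rewrite size_map size_wn. Qed.

Lemma walk_bound (W : seq ('I_n * 'I_n * nat)) :
  temporal_walk wo W -> (forall v : 'I_n, walk_visits W v) ->
  n ^ 2 <= 256 * walk_length W.
Proof.
move=> [HW1 [_ HW3]] Hv.
have := Hv ord0; rewrite /walk_visits => /flatten_mapP [e He Hin].
have [_ [HG Hfac]] := HW1 e He.
move/G_edge_wo: HG => HG.
have Hsmall : forall a, a \in [:: e.1.1; e.1.2] -> (a : nat) <= 1.
  have H0 : (e.1.1 : nat) = 0 \/ (e.1.2 : nat) = 0.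
    by move: Hin; rewrite !inE => /orP [/eqP <-|/eqP <-]; [left|right].
  move=> a; rewrite !inE => /orP [/eqP ->|/eqP ->]; lia.
set M := size (XX n).
have Hwin : forall s, s < M -> ~~ uniq (take 5.+1 (drop s wo)).
  move=> s Hs. rewrite /wo -map_drop -map_take. apply/negP => /map_uniq.
  apply/negP. exact: wn_window.
have Hnot : forall a : 'I_n, (a : nat) <= 1 -> a \notin take M wo.
  move=> a Ha; apply/negP; rewrite /wo -map_take take_wn => /mapP [z Hz Ez].
  have := mem_XX Hn Hz. move: Ha; rewrite Ez inordK; [lia|].
  have := mem_XX Hn Hz. lia.
have HM : M <= 5 * e.2.
  case: Hfac => Ha.
  - apply: (lower_bound Hwin _ Ha). apply: Hnot; apply: Hsmall; by rewrite inE eqxx.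
  - apply: (lower_bound Hwin _ Ha). apply: Hnot; apply: Hsmall; by rewrite !inE eqxx orbT.
have Hle : e.2 <= walk_length W.
  apply: sorted_last => //. exact: (map_f (fun e : 'I_n * 'I_n * nat => e.2) He).
have [Hq1 Hq2] := qq_bound Hn.
move: HM; rewrite /M size_XX => HM.
apply: (arith (divn_eq n 4) (ltn_pmod n (isT : 0 < 4)) Hq2 HM Hle).
Qed.

End O.

Import GRing.Theory Num.Theory.

Theorem theorem17 :
  exists c : rat, (0 < c)%R /\
  exists n0 : nat, forall n : nat, (n0 <= n)%N ->
    exists w : seq 'I_n,
      size w = (4 * n ^ 2)%N /\ temporal_path_graph w /\
      forall W : seq ('I_n * 'I_n * nat),
        temporal_walk w W -> (forall v : 'I_n, walk_visits W v) ->
        (c * (n ^ 2)%:R <= (walk_length W)%:R)%R.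
Proof.
exists (GRing.inv (256%:R : rat)); split; first by rewrite invr_gt0 ltr0n.
exists 16 => n Hn. case: n Hn => [|n'] Hn; first by [].
exists (wo n'). split; first exact: size_wo. split; first exact: path_wo.
move=> W HW Hv. have H := walk_bound Hn HW Hv.
rewrite mulrC ler_pdivrMr ?ltr0n // -natrM ler_nat. lia.
Qed.
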